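(* The functor $\tau:\mathbf{GrpwTop}\to\mathbf{TopGrp}$ satisfies: (1) $\tau$ preserves finite products: for groups with topology $G,H$ (with $G\times H$ given the product topology), the identity $\tau(G\times H)\to\tau(G)\times\tau(H)$ is an isomorphism of topological groups. (2) If a homomorphism $f:G\to H$ of groups with topology is a topological quotient map, then $\tau(f):\tau(G)\to\tau(H)$ is a quotient map. (3) A group with topology $G$ is a topological group if and only if $G=\tau(G)$ (as topological spaces). (4) A group with topology $G$ is discrete if and only if $\tau(G)$ is discrete.
   Context: A group with topology is a group with an arbitrary topology; $\mathbf{GrpwTop}$ is the category of such with continuous homomorphisms, $\mathbf{TopGrp}$ the category of topological groups. $F_M(S)$ is the free (Markov) topological group on a space $S$. For $G$ a group with topology, $\tau(G)$ is $G$ with the quotient topology with respect to the multiplication epimorphism $m_G:F_M(G)\to G$ sending each generator $g$ to $g$; on morphisms $\tau$ is the identity on underlying homomorphisms. *)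

(* Defs.v *)
From Stdlib Require Import Classical.
Set Implicit Arguments.

Definition opens (X : Type) := (X -> Prop) -> Prop.

Record topology (X : Type) := Topology {
  topen :> opens X;
  topen_full : topen (fun _ => True);
  topen_inter : forall U V, topen U -> topen V -> topen (fun x => U x /\ V x);
  topen_union : forall (F : (X -> Prop) -> Prop),
      (forall U, F U -> topen U) -> topen (fun x => exists U, F U /\ U x)
}.

Record group (X : Type) := Group {
  gmul : X -> X -> X;
  ginv : X -> X;
  gone : X;
  gassoc : forall x y z, gmul x (gmul y z) = gmul (gmul x y) z;
  gmul1 : forall x, gmul gone x = x;
  gmulV : forall x, gmul (ginv x) x = gone
}.

Record grpwtop := GrpwTop {
  gcar :> Type;
  ggrp : group gcar;
  gtop : topology gcar
}.

Definition continuous {X Y : Type} (oX : opens X) (oY : opens Y) (f : X -> Y) :=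
  forall V, oY V -> oX (fun x => V (f x)).

Definition prod_open {X Y : Type} (oX : opens X) (oY : opens Y) : opens (X * Y) :=
  fun W => forall p, W p -> exists U V, oX U /\ oY V /\ U (fst p) /\ V (snd p) /\
             (forall q, U (fst q) -> V (snd q) -> W q).

Definition quotient_map {X Y : Type} (oX : opens X) (oY : opens Y) (f : X -> Y) :=
  (forall y, exists x, f x = y) /\ (forall V, oY V <-> oX (fun x => V (f x))).

Definition discrete {X : Type} (oX : opens X) := forall U : X -> Prop, oX U.

Definition is_hom {G H : grpwtop} (f : G -> H) :=
  forall x y, f (gmul (ggrp G) x y) = gmul (ggrp H) (f x) (f y).

Definition is_topological_group (G : grpwtop) :=
  continuous (prod_open (gtop G) (gtop G)) (gtop G)
             (fun p => gmul (ggrp G) (fst p) (snd p)) /\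
  continuous (gtop G) (gtop G) (ginv (ggrp G)).

Definition free_markov {X : Type} (tX : opens X) (F : grpwtop) (s : X -> F) :=
  is_topological_group F /\ continuous tX (gtop F) s /\
  forall (K : grpwtop) (phi : X -> K),
    is_topological_group K -> continuous tX (gtop K) phi ->
    exists psi : F -> K,
      is_hom psi /\ continuous (gtop F) (gtop K) psi /\ (forall x, psi (s x) = phi x) /\
      (forall psi' : F -> K, is_hom psi' -> continuous (gtop F) (gtop K) psi' ->
         (forall x, psi' (s x) = phi x) -> forall w, psi' w = psi w).

(* The opens of tau(G): quotient topology on G w.r.t. the multiplication
   epimorphism m_G : F_M(G) -> G (the homomorphism with m_G (s g) = g),
   for the free Markov topological group (F_M(G), s) on G. *)
Definition tau_open (G : grpwtop) : opens G :=
  fun U => forall (F : grpwtop) (s : G -> F) (m : F -> G),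
    free_markov (gtop G) F s -> is_hom m -> (forall g, m (s g) = g) ->
    topen (gtop F) (fun w => U (m w)).

Section Prod.
Variables G H : grpwtop.

Definition prod_group : group (G * H).
Proof.
refine (@Group (G * H)
  (fun p q => (gmul (ggrp G) (fst p) (fst q), gmul (ggrp H) (snd p) (snd q)))
  (fun p => (ginv (ggrp G) (fst p), ginv (ggrp H) (snd p)))
  (gone (ggrp G), gone (ggrp H)) _ _ _).
- intros [] [] []; simpl; rewrite !gassoc; reflexivity.
- intros []; simpl; rewrite !gmul1; reflexivity.
- intros []; simpl; rewrite !gmulV; reflexivity.
Defined.

Definition prod_topology : topology (G * H).
Proof.
refine (@Topology (G * H) (prod_open (gtop G) (gtop H)) _ _ _).
- intros p _. exists (fun _ => True), (fun _ => True).
  repeat split; auto using topen_full.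
- intros U V hU hV p [Up Vp].
  destruct (hU p Up) as [A [B [hA [hB [Ap [Bp hAB]]]]]].
  destruct (hV p Vp) as [C [D [hC [hD [Cp [Dp hCD]]]]]].
  exists (fun x => A x /\ C x), (fun y => B y /\ D y).
  split; [apply topen_inter; auto|].
  split; [apply topen_inter; auto|].
  split; [split; auto|]. split; [split; auto|].
  intros r [] []; split; auto.
- intros F hF p [U [FU Up]].
  destruct (hF U FU p Up) as [A [B [hA [hB [Ap [Bp hAB]]]]]].
  exists A, B; repeat split; auto. intros q Aq Bq; exists U; auto.
Defined.

Definition prod_gwt : grpwtop := @GrpwTop (G * H) prod_group prod_topology.
End Prod.

(* Main.v *)
Require Import Defs.
From Stdlib Require Import Classical FunctionalExtensionality PropExtensionality ProofIrrelevance
  ClassicalEpsilon List Relations.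
Import ListNotations.
Set Implicit Arguments.


Lemma opens_ext (X : Type) (O : opens X) (U V : X -> Prop) :
  O U -> (forall x, U x <-> V x) -> O V.
Proof.
  intros h e. replace V with U; auto.
  apply functional_extensionality; intro x; apply propositional_extensionality; auto.
Qed.

Lemma opens_local (X : Type) (T : topology X) (U : X -> Prop) :
  (forall x, U x -> exists V, topen T V /\ V x /\ forall y, V y -> U y) -> topen T U.
Proof.
  intros h.
  apply opens_ext with (U := fun x => exists V, (topen T V /\ forall y, V y -> U y) /\ V x).
  - apply topen_union. intros V [hV _]; auto.
  - intros x; split.
    + intros [V [[_ hV] Vx]]; auto.
    + intros Ux. destruct (h x Ux) as [V [hV [Vx hVU]]]. exists V; auto.
Qed.

Lemma topen_empty (X : Type) (T : topology X) : topen T (fun _ => False).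
Proof.
  apply opens_ext with (U := fun x => exists U, (fun _ : X -> Prop => False) U /\ U x).
  - apply topen_union. intros U [].
  - intros x; split; [intros [U [[] _]] | intros []].
Qed.

Section Grp.
Variable X : Type.
Variable g : group X.
Notation "a * b" := (gmul g a b).

Lemma mulVr x : x * ginv g x = gone g.
Proof.
  set (y := x * ginv g x).
  assert (yy : y * y = y).
  { unfold y. rewrite <- gassoc. rewrite (gassoc g (ginv g x) x (ginv g x)).
    rewrite gmulV, gmul1. reflexivity. }
  assert (H : ginv g y * (y * y) = ginv g y * y) by (rewrite yy; reflexivity).
  rewrite gassoc, gmulV, gmul1 in H. exact H.
Qed.

Lemma mulr1 x : x * gone g = x.
Proof. rewrite <- (gmulV g x), gassoc, mulVr, gmul1. reflexivity. Qed.

Lemma inv_uniq a b : a * b = gone g -> a = ginv g b.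
Proof.
  intros h. rewrite <- (mulr1 a), <- (mulVr b), gassoc, h, gmul1. reflexivity.
Qed.

Lemma invK x : ginv g (ginv g x) = x.
Proof. symmetry. apply inv_uniq. apply mulVr. Qed.
End Grp.

Definition ghom {X Y} (g1 : group X) (g2 : group Y) (f : X -> Y) :=
  forall x y, f (gmul g1 x y) = gmul g2 (f x) (f y).

Lemma hom_one X Y (g1 : group X) (g2 : group Y) f :
  ghom g1 g2 f -> f (gone g1) = gone g2.
Proof.
  intros h. assert (e : f (gone g1) = gmul g2 (f (gone g1)) (f (gone g1))).
  { rewrite <- h, gmul1. reflexivity. }
  assert (e2 : gmul g2 (ginv g2 (f (gone g1))) (f (gone g1)) =
               gmul g2 (ginv g2 (f (gone g1))) (gmul g2 (f (gone g1)) (f (gone g1)))).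
  { rewrite <- e. reflexivity. }
  rewrite gassoc, gmulV, gmul1 in e2. auto.
Qed.

Lemma hom_inv X Y (g1 : group X) (g2 : group Y) f x :
  ghom g1 g2 f -> f (ginv g1 x) = ginv g2 (f x).
Proof.
  intros h. apply inv_uniq. rewrite <- h, gmulV. apply (hom_one h).
Qed.

Definition tg {X} (g : group X) (O : opens X) :=
  continuous (prod_open O O) O (fun p => gmul g (fst p) (snd p)) /\
  continuous O O (ginv g).

Lemma tg_ext X (g : group X) (O1 O2 : opens X) :
  tg g O1 -> (forall U, O1 U <-> O2 U) -> tg g O2.
Proof.
  intros h e. replace O2 with O1; auto.
  apply functional_extensionality; intro U; apply propositional_extensionality; auto.
Qed.

Lemma tg_transl X (g : group X) (T : topology X) c V :
  tg g T -> topen T V -> topen T (fun z => V (gmul g z c)).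
Proof.
  intros [hm _] hV. apply opens_local. intros z hz.
  destruct (hm V hV (z, c) hz) as [A [B [hA [hB [Az [Bc hAB]]]]]].
  exists A; repeat split; auto. intros y Ay. apply (hAB (y, c)); auto.
Qed.

Definition ind_top (X : Type) : topology X.
Proof.
  refine (@Topology X (fun U => (forall x, U x) \/ (forall x, ~ U x)) _ _ _).
  - left; auto.
  - intros U V [hU|hU] [hV|hV].
    + left; auto.
    + right; intros x [_ h]; exact (hV x h).
    + right; intros x [h _]; exact (hU x h).
    + right; intros x [h _]; exact (hU x h).
  - intros F hF. destruct (classic (exists U, F U /\ forall x, U x)) as [[U [FU hU]]|n].
    + left; intros x; exists U; auto.
    + right; intros x [U [FU Ux]]. destruct (hF U FU) as [h|h].
      * apply n; exists U; auto.
      * exact (h x Ux).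
Defined.

Lemma ind_cont X Y (T : topology X) (f : X -> Y) : continuous T (ind_top Y) f.
Proof.
  intros V [h|h].
  - apply opens_ext with (U := fun _ => True). apply topen_full. intros x; split; auto.
  - apply opens_ext with (U := fun _ => False). apply topen_empty. intros x; split; [intros []|apply h].
Qed.

Lemma ind_tg X (g : group X) : tg g (ind_top X).
Proof.
  split.
  - intros V [h|h].
    + intros p _. exists (fun _ => True), (fun _ => True). simpl. repeat split; auto.
    + intros p hp. exfalso; exact (h _ hp).
  - intros V [h|h]; [left|right]; intros x; apply h.
Qed.

Definition pull X Y (T : topology Y) (f : X -> Y) : topology X.
Proof.
  refine (@Topology X (fun U => exists V, topen T V /\ forall x, U x <-> V (f x)) _ _ _).
  - exists (fun _ => True); split; [apply topen_full|tauto].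
  - intros U V [U' [hU eU]] [V' [hV eV]]. exists (fun y => U' y /\ V' y); split.
    + apply topen_inter; auto.
    + intros x; rewrite eU, eV; tauto.
  - intros F hF.
    exists (fun y => exists V, (topen T V /\ exists U, F U /\ forall x, U x <-> V (f x)) /\ V y).
    split.
    + apply topen_union. intros V [h _]; auto.
    + intros x; split.
      * intros [U [FU Ux]]. destruct (hF U FU) as [V [hV eV]].
        exists V; split; [split; [auto| exists U; auto] | apply eV; auto].
      * intros [V [[_ [U [FU eU]]] Vx]]. exists U; split; auto. apply eU; auto.
Defined.

Lemma pull_tg X Y (gX : group X) (gY : group Y) (T : topology Y) (f : X -> Y) :
  ghom gX gY f -> tg gY T -> tg gX (pull T f).
Proof.
  intros hf [hm hi]. split.
  - intros W [V [hV eV]] p Wp.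
    apply eV in Wp. rewrite hf in Wp.
    destruct (hm V hV (f (fst p), f (snd p)) Wp) as [A [B [hA [hB [Aa [Bb hAB]]]]]].
    exists (fun x => A (f x)), (fun x => B (f x)). simpl. repeat split.
    + exists A; split; auto; tauto.
    + exists B; split; auto; tauto.
    + auto.
    + auto.
    + intros q Aq Bq. apply eV. rewrite hf. apply (hAB (f (fst q), f (snd q))); auto.
  - intros W [V [hV eV]]. exists (fun y => V (ginv gY y)); split.
    + apply hi; auto.
    + intros x. rewrite eV. rewrite (hom_inv _ hf). tauto.
Qed.

Definition quot_top X Y (T : topology X) (f : X -> Y) : topology Y.
Proof.
  refine (@Topology Y (fun V => topen T (fun x => V (f x))) _ _ _).
  - apply topen_full.
  - intros U V hU hV. apply topen_inter; auto.
  - intros F hF.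
    apply opens_ext with (U := fun x => exists U', (exists U, F U /\ forall x, U' x <-> U (f x)) /\ U' x).
    + apply topen_union. intros U' [U [FU eU]]. apply opens_ext with (U := fun x => U (f x)).
      apply hF; auto. intros x; rewrite eU; tauto.
    + intros x; split.
      * intros [U' [[U [FU eU]] hx]]. exists U; split; auto. apply eU; auto.
      * intros [U [FU hx]]. exists (fun x => U (f x)). split; auto. exists U; split; auto; tauto.
Defined.

Lemma quot_tg X Y (gX : group X) (gY : group Y) (T : topology X) (f : X -> Y) :
  ghom gX gY f -> (forall y, exists x, f x = y) -> tg gX T -> tg gY (quot_top T f).
Proof.
  intros hf sf htg. pose proof htg as [hm hi]. split.
  - intros W hW p Wp. simpl in hW.
    destruct (sf (fst p)) as [x ex]. destruct (sf (snd p)) as [y ey].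
    assert (Wxy : W (f (gmul gX x y))) by (rewrite hf, ex, ey; auto).
    destruct (hm _ hW (x, y) Wxy) as [A [B [hA [hB [Ax [By hAB]]]]]].
    assert (img : forall A, topen T A -> topen (quot_top T f) (fun c => exists x', A x' /\ f x' = c)).
    { intros A0 hA0. simpl. apply opens_local. intros z [x' [A0x' ez]].
      set (k := gmul gX (ginv gX x') z).
      exists (fun w => A0 (gmul gX w (ginv gX k))). repeat split.
      - apply tg_transl; auto.
      - unfold k. replace (gmul gX z (ginv gX (gmul gX (ginv gX x') z))) with x'; auto.
        apply eq_sym.
        assert (e : gmul gX (gmul gX z (ginv gX (gmul gX (ginv gX x') z))) (gmul gX (ginv gX x') z) = z).
        { rewrite <- gassoc, gmulV, mulr1. reflexivity. }
        assert (e2 : gmul gX x' (gmul gX (ginv gX x') z) = z).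
        { rewrite gassoc, mulVr, gmul1. reflexivity. }
        set (a := gmul gX z (ginv gX (gmul gX (ginv gX x') z))) in *.
        set (b := gmul gX (ginv gX x') z) in *.
        rewrite <- e2 in e.
        assert (e3 : gmul gX (gmul gX a b) (ginv gX b) = gmul gX (gmul gX x' b) (ginv gX b)) by (rewrite e; reflexivity).
        rewrite <- !gassoc, mulVr, !mulr1 in e3. exact e3.
      - intros w Aw. exists (gmul gX w (ginv gX k)). split; auto.
        rewrite hf, (hom_inv _ hf). unfold k. rewrite hf, (hom_inv _ hf), ez. rewrite gmulV, <- (inv_uniq _ _ _ (gmul1 gY (gone gY))), mulr1. reflexivity. }
    exists (fun c => exists x', A x' /\ f x' = c), (fun c => exists x', B x' /\ f x' = c).
    repeat split.
    + apply img; auto.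
    + apply img; auto.
    + exists x; auto.
    + exists y; auto.
    + intros q [x1 [Ax1 e1]] [y1 [By1 e2]]. rewrite <- e1, <- e2, <- hf.
      apply (hAB (x1, y1)); auto.
  - intros V hV. simpl in *. apply opens_ext with (U := fun x => V (f (ginv gX x))).
    + apply (hi (fun x => V (f x))); auto.
    + intros x; rewrite (hom_inv _ hf); tauto.
Qed.

Lemma prod_rect X Y (O1 : opens X) (O2 : opens Y) A B :
  O1 A -> O2 B -> prod_open O1 O2 (fun q => A (fst q) /\ B (snd q)).
Proof. intros hA hB p [Ap Bp]. exists A, B; repeat split; auto. Qed.

Lemma prod_tg (G H : grpwtop) (O1 : opens G) (O2 : opens H) :
  tg (ggrp G) O1 -> tg (ggrp H) O2 -> tg (prod_group G H) (prod_open O1 O2).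
Proof.
  intros [m1 i1] [m2 i2]. split.
  - intros W hW [[a1 a2] [b1 b2]] Wp. simpl in Wp.
    destruct (hW _ Wp) as [U [V [hU [hV [Ua [Va hUV]]]]]]. simpl in Ua, Va.
    destruct (m1 U hU (a1, b1) Ua) as [A1 [B1 [hA1 [hB1 [A1a [B1b h1]]]]]].
    destruct (m2 V hV (a2, b2) Va) as [A2 [B2 [hA2 [hB2 [A2a [B2b h2]]]]]].
    exists (fun q => A1 (fst q) /\ A2 (snd q)), (fun q => B1 (fst q) /\ B2 (snd q)).
    repeat split; try apply prod_rect; simpl; auto.
    intros [[x1 x2] [y1 y2]] [Ax1 Ax2] [By1 By2]. simpl in *. apply hUV; simpl.
    + apply (h1 (x1, y1)); auto.
    + apply (h2 (x2, y2)); auto.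
  - intros W hW [x1 x2] Wx. simpl in Wx.
    destruct (hW _ Wx) as [U [V [hU [hV [Ua [Va hUV]]]]]]. simpl in Ua, Va.
    exists (fun y => U (ginv (ggrp G) y)), (fun y => V (ginv (ggrp H) y)).
    repeat split; auto; intros [y1 y2] h1 h2; apply hUV; simpl in *; auto.
Qed.

Lemma prod_mono X Y (O1 O1' : opens X) (O2 O2' : opens Y) :
  (forall U, O1 U -> O1' U) -> (forall U, O2 U -> O2' U) ->
  forall W, prod_open O1 O2 W -> prod_open O1' O2' W.
Proof.
  intros h1 h2 W hW p Wp. destruct (hW p Wp) as [U [V [hU [hV r]]]].
  exists U, V; auto.
Qed.

Definition join_top X (T1 T2 : topology X) : topology X.
Proof.
  refine (@Topology X (fun U => forall x, U x -> exists V1 V2, topen T1 V1 /\ topen T2 V2 /\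
             V1 x /\ V2 x /\ forall y, V1 y -> V2 y -> U y) _ _ _).
  - intros x _. exists (fun _ => True), (fun _ => True). repeat split; auto; apply topen_full.
  - intros U V hU hV x [Ux Vx].
    destruct (hU x Ux) as [A1 [A2 [a1 [a2 [xa1 [xa2 ha]]]]]].
    destruct (hV x Vx) as [B1 [B2 [b1 [b2 [xb1 [xb2 hb]]]]]].
    exists (fun y => A1 y /\ B1 y), (fun y => A2 y /\ B2 y).
    repeat split; try apply topen_inter; auto; [apply ha|apply hb]; tauto.
  - intros F hF x [U [FU Ux]].
    destruct (hF U FU x Ux) as [A1 [A2 [a1 [a2 [xa1 [xa2 ha]]]]]].
    exists A1, A2; repeat split; auto. intros y h1 h2. exists U; auto.
Defined.

Lemma join_tg X (g : group X) (T1 T2 : topology X) :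
  tg g T1 -> tg g T2 -> tg g (join_top T1 T2).
Proof.
  intros [m1 i1] [m2 i2]. split.
  - intros W hW p Wp. simpl in hW.
    destruct (hW _ Wp) as [V1 [V2 [v1 [v2 [x1 [x2 hv]]]]]].
    destruct (m1 V1 v1 p x1) as [A1 [B1 [hA1 [hB1 [A1a [B1b h1]]]]]].
    destruct (m2 V2 v2 p x2) as [A2 [B2 [hA2 [hB2 [A2a [B2b h2]]]]]].
    exists (fun y => A1 y /\ A2 y), (fun y => B1 y /\ B2 y). repeat split; auto.
    + simpl. intros y [] . exists A1, A2; repeat split; auto.
    + simpl. intros y [] . exists B1, B2; repeat split; auto.
    + intros q [] []. apply hv; [apply h1|apply h2]; auto.
  - intros W hW x Wx. simpl in hW.
    destruct (hW _ Wx) as [V1 [V2 [v1 [v2 [x1 [x2 hv]]]]]].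
    exists (fun y => V1 (ginv g y)), (fun y => V2 (ginv g y)).
    repeat split; auto.
Qed.

Lemma join_cont X Y (O : topology Y) (T1 T2 : topology X) (s : Y -> X) :
  continuous O T1 s -> continuous O T2 s -> continuous O (join_top T1 T2) s.
Proof.
  intros c1 c2 V hV. apply opens_local. intros y Vy.
  destruct (hV _ Vy) as [V1 [V2 [v1 [v2 [x1 [x2 hv]]]]]].
  exists (fun y => V1 (s y) /\ V2 (s y)). repeat split; auto.
  - apply topen_inter; [apply c1|apply c2]; auto.
  - intros z []; auto.
Qed.

Section Free.
Variable X : Type.
Definition letter := (bool * X)%type.
Definition word := list letter.
Definition flip (a : letter) : letter := (negb (fst a), snd a).
Lemma flipK a : flip (flip a) = a.
Proof. destruct a as [[] x]; reflexivity. Qed.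

Inductive step : word -> word -> Prop :=
  step_intro u v a : step (u ++ a :: flip a :: v) (u ++ v).

Definition eqv := clos_refl_sym_trans word step.

Lemma eqv_refl w : eqv w w. Proof. apply rst_refl. Qed.
Lemma eqv_sym u v : eqv u v -> eqv v u. Proof. apply rst_sym. Qed.
Lemma eqv_trans u v w : eqv u v -> eqv v w -> eqv u w. Proof. apply rst_trans. Qed.

Lemma eqv_appl w u v : eqv u v -> eqv (w ++ u) (w ++ v).
Proof.
  induction 1.
  - destruct H. apply rst_step. rewrite !app_assoc. constructor.
  - apply rst_refl.
  - apply rst_sym; auto.
  - eapply rst_trans; eauto.
Qed.

Lemma eqv_appr w u v : eqv u v -> eqv (u ++ w) (v ++ w).
Proof.
  induction 1.
  - destruct H. apply rst_step. rewrite <- !app_assoc. simpl. constructor.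
  - apply rst_refl.
  - apply rst_sym; auto.
  - eapply rst_trans; eauto.
Qed.

Definition winv (w : word) : word := rev (map flip w).

Lemma winvK w : winv (winv w) = w.
Proof.
  unfold winv. rewrite map_rev, rev_involutive, map_map.
  transitivity (map (fun x => x) w). apply map_ext; apply flipK. apply map_id.
Qed.

Lemma eqv_inv u v : eqv u v -> eqv (winv u) (winv v).
Proof.
  induction 1.
  - destruct H. apply rst_step. unfold winv. rewrite !map_app, !rev_app_distr. simpl.
    rewrite <- !app_assoc. simpl.
    pose proof (step_intro (rev (map flip v)) (rev (map flip u)) (flip (flip a))) as h.
    rewrite flipK in h at 2. exact h.
  - apply rst_refl.
  - apply rst_sym; auto.
  - eapply rst_trans; eauto.
Qed.

Lemma eqv_cancel w : eqv (w ++ winv w) [].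
Proof.
  induction w as [|a w IH].
  - apply rst_refl.
  - unfold winv. simpl. rewrite app_assoc.
    apply eqv_trans with (a :: [flip a]).
    + change (eqv ([a] ++ ((w ++ rev (map flip w)) ++ [flip a])) ([a] ++ ([] ++ [flip a]))).
      apply eqv_appl. apply eqv_appr. exact IH.
    + apply rst_step. apply (step_intro [] [] a).
Qed.

Lemma eqv_cancel_l w : eqv (winv w ++ w) [].
Proof. pose proof (eqv_cancel (winv w)) as h. rewrite winvK in h. exact h. Qed.

Definition cls (w : word) : word -> Prop := fun w' => eqv w w'.
Definition FG := { P : word -> Prop | exists w, P = cls w }.
Definition proj (w : word) : FG := exist _ (cls w) (ex_intro _ w eq_refl).
Definition rep (p : FG) : word := proj1_sig (constructive_indefinite_description _ (proj2_sig p)).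

Lemma FG_eq (p q : FG) : proj1_sig p = proj1_sig q -> p = q.
Proof.
  destruct p, q; simpl; intros; subst; f_equal; apply proof_irrelevance.
Qed.

Lemma proj_eq u v : eqv u v -> proj u = proj v.
Proof.
  intros h. apply FG_eq; simpl. apply functional_extensionality; intros w.
  apply propositional_extensionality. unfold cls; split; intros.
  - eapply eqv_trans; [apply eqv_sym|]; eauto.
  - eapply eqv_trans; eauto.
Qed.

Lemma proj_eq_inv u v : proj u = proj v -> eqv u v.
Proof.
  intros h. apply (f_equal (@proj1_sig _ _)) in h. simpl in h.
  assert (cls v v) by apply eqv_refl. rewrite <- h in H. exact H.
Qed.

Lemma proj_rep p : proj (rep p) = p.
Proof.
  apply FG_eq. unfold rep. destruct (constructive_indefinite_description _ _) as [w e].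
  simpl. auto.
Qed.

Lemma rep_proj w : eqv (rep (proj w)) w.
Proof. apply proj_eq_inv. rewrite proj_rep. reflexivity. Qed.

Definition fmul (p q : FG) := proj (rep p ++ rep q).
Definition finv (p : FG) := proj (winv (rep p)).
Definition fone := proj [].

Lemma fmul_proj u v : fmul (proj u) (proj v) = proj (u ++ v).
Proof.
  unfold fmul. apply proj_eq. eapply eqv_trans. apply eqv_appr, rep_proj. apply eqv_appl, rep_proj.
Qed.

Lemma finv_proj u : finv (proj u) = proj (winv u).
Proof. unfold finv. apply proj_eq, eqv_inv, rep_proj. Qed.

Definition FGgroup : group FG.
Proof.
  refine (@Group FG fmul finv fone _ _ _).
  - intros x y z. rewrite <- (proj_rep x), <- (proj_rep y), <- (proj_rep z).
    rewrite !fmul_proj, app_assoc. reflexivity.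
  - intros x. rewrite <- (proj_rep x). unfold fone. rewrite fmul_proj. reflexivity.
  - intros x. rewrite <- (proj_rep x). rewrite finv_proj, fmul_proj. apply proj_eq, eqv_cancel_l.
Defined.

Definition sgen (x : X) : FG := proj [(true, x)].

Section Eval.
Variable K : Type.
Variable gK : group K.
Variable phi : X -> K.
Definition ev (a : letter) : K := if fst a then phi (snd a) else ginv gK (phi (snd a)).
Definition evw (w : word) : K := fold_right (fun a acc => gmul gK (ev a) acc) (gone gK) w.

Lemma evw_app u v : evw (u ++ v) = gmul gK (evw u) (evw v).
Proof.
  induction u; simpl. rewrite gmul1; auto. rewrite IHu, gassoc; auto.
Qed.

Lemma ev_flip a : gmul gK (ev a) (ev (flip a)) = gone gK.
Proof. destruct a as [[] x]; simpl. apply mulVr. apply gmulV. Qed.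

Lemma evw_eqv u v : eqv u v -> evw u = evw v.
Proof.
  induction 1; auto; [| congruence].
  destruct H. rewrite !evw_app. simpl. rewrite (gassoc gK (ev a)), ev_flip, gmul1. reflexivity.
Qed.

Definition fpsi (p : FG) : K := evw (rep p).

Lemma fpsi_proj w : fpsi (proj w) = evw w.
Proof. apply evw_eqv, rep_proj. Qed.

Lemma fpsi_hom : ghom FGgroup gK fpsi.
Proof.
  intros p q. simpl. unfold fmul. rewrite fpsi_proj, evw_app. reflexivity.
Qed.

Lemma fpsi_gen x : fpsi (sgen x) = phi x.
Proof. unfold sgen. rewrite fpsi_proj. simpl. apply mulr1. Qed.

Lemma fpsi_uniq (psi' : FG -> K) : ghom FGgroup gK psi' -> (forall x, psi' (sgen x) = phi x) ->
  forall p, psi' p = fpsi p.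
Proof.
  intros hh hg p. rewrite <- (proj_rep p). rewrite fpsi_proj. generalize (rep p). clear p.
  induction w as [|a w IH].
  - apply (hom_one hh).
  - change (a :: w) with ([a] ++ w). rewrite <- fmul_proj.
    change (psi' (gmul FGgroup (proj [a]) (proj w)) = evw ([a] ++ w)).
    rewrite hh, IH, evw_app. f_equal. simpl. rewrite mulr1.
    destruct a as [[] x]; simpl.
    + apply hg.
    + apply inv_uniq. rewrite <- hg, <- hh. simpl. unfold sgen. rewrite fmul_proj, <- (hom_one hh).
      f_equal. apply proj_eq. apply rst_step. apply (step_intro [] [] (false, x)).
Qed.
End Eval.
End Free.

Section FM.
Variable G : grpwtop.
Let F := FG G.
Let gF := FGgroup G.
Let s := @sgen G.

Definition good (T : topology F) := tg gF T /\ continuous (gtop G) T s.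

Definition opens0 : opens F := fun U => forall x, U x ->
  exists T : topology F, good T /\ exists V, topen T V /\ V x /\ forall y, V y -> U y.

Lemma good_ind : good (ind_top F).
Proof. split. apply ind_tg. apply ind_cont. Qed.

Lemma good_join T1 T2 : good T1 -> good T2 -> good (join_top T1 T2).
Proof. intros [a b] [c d]; split. apply join_tg; auto. apply join_cont; auto. Qed.

Lemma good_open T A : good T -> topen T A -> opens0 A.
Proof. intros gT hA x Ax. exists T; split; auto. exists A; auto. Qed.

Definition F0top : topology F.
Proof.
  refine (@Topology F opens0 _ _ _).
  - intros x _. exists (ind_top F); split. apply good_ind. exists (fun _ => True).
    repeat split; auto. left; auto.
  - intros U V hU hV x [Ux Vx].
    destruct (hU x Ux) as [T1 [g1 [V1 [o1 [x1 h1]]]]].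
    destruct (hV x Vx) as [T2 [g2 [V2 [o2 [x2 h2]]]]].
    exists (join_top T1 T2); split. apply good_join; auto.
    exists (fun y => V1 y /\ V2 y). repeat split; auto; try (apply h1; tauto); try (apply h2; tauto). simpl. intros z [a b]. exists V1, V2. repeat split; auto.
  - intros Fm hF x [U [FU Ux]].
    destruct (hF U FU x Ux) as [T [gT [V [o [xV h]]]]].
    exists T; split; auto. exists V; repeat split; auto. intros y Vy. exists U; auto.
Defined.

Definition F0 : grpwtop := @GrpwTop F gF F0top.

Lemma F0_free : free_markov (gtop G) F0 s.
Proof.
  split; [|split].
  - split.
    + intros W hW p Wp. simpl in hW.
      destruct (hW _ Wp) as [T [[[hm hi] hc] [V [o [xV h]]]]].
      destruct (hm V o p xV) as [A [B [hA [hB [Ap [Bp hAB]]]]]].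
      exists A, B. repeat split; auto.
      * apply (good_open (T := T)); auto. split; [split|]; auto.
      * apply (good_open (T := T)); auto. split; [split|]; auto.
    + intros W hW x Wx. simpl in hW.
      destruct (hW _ Wx) as [T [[[hm hi] hc] [V [o [xV h]]]]].
      exists T; split. split; [split|]; auto.
      exists (fun y => V (ginv gF y)); repeat split; auto.
  - intros V hV. apply opens_local. intros g Vg.
    destruct (hV _ Vg) as [T [[_ hc] [V' [o [xV h]]]]].
    exists (fun y => V' (s y)); repeat split; auto.
  - intros K phi hK hphi.
    exists (fpsi (ggrp K) phi). split; [|split; [|split]].
    + apply fpsi_hom.
    + intros V hV. simpl. intros w Vw.
      exists (pull (gtop K) (fpsi (ggrp K) phi)). split.
      * split. apply (pull_tg (gY := ggrp K)). apply fpsi_hom. exact hK.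
        intros U [U' [hU' eU]]. apply opens_ext with (U := fun x => U' (phi x)).
        apply hphi; auto. intros x. unfold s. rewrite eU, fpsi_gen. tauto.
      * exists (fun w => V (fpsi (ggrp K) phi w)). repeat split; auto.
        exists V; split; auto; tauto.
    + apply fpsi_gen.
    + intros psi' h1 _ h3. apply fpsi_uniq; auto.
Qed.
End FM.

Lemma free_exists (G : grpwtop) : exists (F : grpwtop) (s : G -> F), free_markov (gtop G) F s.
Proof. exists (F0 G), (@sgen G). apply F0_free. Qed.

Definition Fin (G : grpwtop) (U : G -> Prop) := exists T : topology G,
  tg (ggrp G) T /\ (forall V, topen T V -> topen (gtop G) V) /\ topen T U.

Lemma exists_m (G F : grpwtop) (s : G -> F) : free_markov (gtop G) F s ->
  exists m : F -> G, ghom (ggrp F) (ggrp G) m /\ forall g, m (s g) = g.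
Proof.
  intros [_ [_ u]].
  destruct (u (@GrpwTop G (ggrp G) (ind_top G)) (fun g => g)) as [m [hm [_ [hs _]]]].
  - apply ind_tg.
  - apply ind_cont.
  - exists m; auto.
Qed.

Lemma L2 (G F : grpwtop) (s : G -> F) (m : F -> G) U :
  free_markov (gtop G) F s -> ghom (ggrp F) (ggrp G) m -> (forall g, m (s g) = g) ->
  Fin G U -> topen (gtop F) (fun w => U (m w)).
Proof.
  intros fm hm hs [T [tT [le TU]]].
  pose proof fm as [_ [_ u]].
  destruct (u (@GrpwTop G (ggrp G) T) (fun g => g)) as [psi [hp [cp [sp _]]]].
  - exact tT.
  - intros V hV. apply le. auto.
  - destruct (u (@GrpwTop G (ggrp G) (ind_top G)) (fun g => g)) as [pi [_ [_ [_ upi]]]].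
    + apply ind_tg.
    + apply ind_cont.
    + assert (e : forall w, m w = psi w).
      { intros w. rewrite (upi m hm (ind_cont _ _) hs w), (upi psi hp (ind_cont _ _) sp w). auto. }
      apply opens_ext with (U := fun w => U (psi w)).
      * apply cp; auto.
      * intros w; rewrite e; tauto.
Qed.

Lemma L1 (G F : grpwtop) (s : G -> F) (m : F -> G) U :
  free_markov (gtop G) F s -> ghom (ggrp F) (ggrp G) m -> (forall g, m (s g) = g) ->
  topen (gtop F) (fun w => U (m w)) -> Fin G U.
Proof.
  intros fm hm hs hU. pose proof fm as [tF [cs _]].
  exists (quot_top (gtop F) m). split; [|split].
  - apply quot_tg with (gX := ggrp F); auto. intros y; exists (s y); auto.
  - intros V hV. simpl in hV. apply opens_ext with (U := fun g => V (m (s g))).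
    apply (cs _ hV). intros g; rewrite hs; tauto.
  - exact hU.
Qed.

Lemma tau_char (G : grpwtop) U : tau_open G U <-> Fin G U.
Proof.
  split.
  - intros h. destruct (free_exists G) as [F [s fm]].
    destruct (@exists_m _ _ _ fm) as [m [hm hs]].
    apply (@L1 _ _ _ _ _ fm hm hs). apply (h F s m fm hm hs).
  - intros h F s m fm hm hs. apply (@L2 _ _ _ _ _ fm hm hs h).
Qed.

Definition tau_top (G : grpwtop) : topology G.
Proof.
  refine (@Topology G (tau_open G) _ _ _).
  - intros F s m _ _ _. apply topen_full.
  - intros U V hU hV F s m a b c. apply topen_inter; [apply (hU F s m a b c)|apply (hV F s m a b c)].
  - intros Fm hF F s m a b c.
    apply opens_ext with (U := fun w => exists U', (exists U, Fm U /\ forall w, U' w <-> U (m w)) /\ U' w).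
    + apply topen_union. intros U' [U [FU eU]]. apply opens_ext with (U := fun w => U (m w)).
      apply (hF U FU F s m a b c). intros w; rewrite eU; tauto.
    + intros w; split.
      * intros [U' [[U [FU eU]] hw]]. exists U; split; auto. apply eU; auto.
      * intros [U [FU hw]]. exists (fun w => U (m w)). split; auto. exists U; split; auto; tauto.
Defined.

Lemma tau_tg (G : grpwtop) : tg (ggrp G) (tau_open G).
Proof.
  destruct (free_exists G) as [F [s fm]].
  destruct (@exists_m _ _ _ fm) as [m [hm hs]].
  pose proof fm as [tF _].
  apply tg_ext with (O1 := topen (quot_top (gtop F) m)).
  - apply quot_tg with (gX := ggrp F); auto. intros y; exists (s y); auto.
  - intros U; split.
    + intros h. apply tau_char. apply (@L1 _ _ _ _ _ fm hm hs). exact h.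
    + intros h. exact (h F s m fm hm hs).
Qed.

Lemma tau_le (G : grpwtop) U : tau_open G U -> topen (gtop G) U.
Proof. intros h. apply tau_char in h. destruct h as [T [_ [le TU]]]. auto. Qed.

Lemma tau_max (G : grpwtop) (T : topology G) U :
  tg (ggrp G) T -> (forall V, topen T V -> topen (gtop G) V) -> topen T U -> tau_open G U.
Proof. intros a b c. apply tau_char. exists T; auto. Qed.

Lemma slice1 X Y (T1 : topology X) (T2 : opens Y) V c :
  prod_open T1 T2 V -> topen T1 (fun x => V (x, c)).
Proof.
  intros h. apply opens_local. intros x Vx.
  destruct (h _ Vx) as [U1 [U2 [o1 [o2 [u1 [u2 hU]]]]]].
  exists U1; repeat split; auto; intros y Uy; apply (hU (y, c)); auto.
Qed.

Lemma slice2 X Y (T1 : opens X) (T2 : topology Y) V c :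
  prod_open T1 T2 V -> topen T2 (fun y => V (c, y)).
Proof.
  intros h. apply opens_local. intros y Vy.
  destruct (h _ Vy) as [U1 [U2 [o1 [o2 [u1 [u2 hU]]]]]].
  exists U2; repeat split; auto; intros z Uz; apply (hU (c, z)); auto.
Qed.

Lemma disc_tg X (g : group X) (O : opens X) : (forall U, O U) -> tg g O.
Proof.
  intros d. split.
  - intros W _ p Wp. exists (fun x => x = fst p), (fun y => y = snd p).
    repeat split; auto. intros [q1 q2] e1 e2. simpl in *. subst. destruct p; auto.
  - intros V _. apply d.
Qed.

Theorem proposition3p3 :
  (* (1) tau preserves finite products *)
  (forall (G H : grpwtop) (W : G * H -> Prop),
      tau_open (prod_gwt G H) W <-> prod_open (tau_open G) (tau_open H) W) /\
  (* (2) tau preserves quotient homomorphisms *)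
  (forall (G H : grpwtop) (f : G -> H),
      is_hom f -> quotient_map (gtop G) (gtop H) f ->
      quotient_map (tau_open G) (tau_open H) f) /\
  (* (3) G is a topological group iff G = tau(G) *)
  (forall G : grpwtop,
      is_topological_group G <-> (forall U, topen (gtop G) U <-> tau_open G U)) /\
  (* (4) G discrete iff tau(G) discrete *)
  (forall G : grpwtop, discrete (gtop G) <-> discrete (tau_open G)).
Proof.
  split; [|split; [|split]].
  - intros G H W. split.
    + intros h p Wp.
      pose proof (tau_tg (prod_gwt G H)) as [hm _].
      set (a := (fst p, gone (ggrp H))). set (b := (gone (ggrp G), snd p)).
      assert (Wab : W (gmul (ggrp (prod_gwt G H)) a b)).
      { simpl. rewrite mulr1, gmul1, <- surjective_pairing. exact Wp. }
      destruct (hm W h (a, b) Wab) as [A [B [hA [hB [Aa [Bb hAB]]]]]].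
      exists (fun x => A (x, gone (ggrp H))), (fun y => B (gone (ggrp G), y)).
      split; [|split; [|split; [|split]]].
      * apply tau_max with (T := pull (tau_top (prod_gwt G H)) (fun x : G => (x, gone (ggrp H)))).
        -- apply (pull_tg (gY := ggrp (prod_gwt G H))).
           ++ intros x y. simpl. rewrite gmul1. reflexivity.
           ++ apply tau_tg.
        -- intros V [V' [hV' eV]]. apply opens_ext with (U := fun x => V' (x, gone (ggrp H))).
           ++ apply slice1 with (T2 := topen (gtop H)). apply (tau_le hV').
           ++ intros x; rewrite eV; tauto.
        -- exists A; split; [exact hA| tauto].
      * apply tau_max with (T := pull (tau_top (prod_gwt G H)) (fun y : H => (gone (ggrp G), y))).
        -- apply (pull_tg (gY := ggrp (prod_gwt G H))).
           ++ intros x y. simpl. rewrite gmul1. reflexivity.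
           ++ apply tau_tg.
        -- intros V [V' [hV' eV]]. apply opens_ext with (U := fun y => V' (gone (ggrp G), y)).
           ++ apply slice2 with (T1 := topen (gtop G)). apply (tau_le hV').
           ++ intros x; rewrite eV; tauto.
        -- exists B; split; [exact hB| tauto].
      * exact Aa.
      * exact Bb.
      * intros q Aq Bq. pose proof (hAB ((fst q, gone (ggrp H)), (gone (ggrp G), snd q)) Aq Bq) as r.
        simpl in r. rewrite mulr1, gmul1, <- surjective_pairing in r. exact r.
    + intros h.
      apply tau_max with (T := prod_topology (@GrpwTop G (ggrp G) (tau_top G)) (@GrpwTop H (ggrp H) (tau_top H))).
      * apply (@prod_tg G H _ _ (tau_tg G) (tau_tg H)).
      * intros V hV. apply prod_mono with (O1 := tau_open G) (O2 := tau_open H); auto; apply tau_le.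
      * exact h.
  - intros G H f hf [sf qf]. split; auto. intros V. split.
    + intros hV. apply tau_char in hV. destruct hV as [T [tT [le TV]]].
      apply tau_max with (T := pull T f).
      * apply (pull_tg (gY := ggrp H)); auto.
      * intros U [V' [hV' eU]]. apply opens_ext with (U := fun x => V' (f x)).
        -- apply qf. apply le; auto.
        -- intros x; rewrite eU; tauto.
      * exists V; split; auto; tauto.
    + intros hV. apply tau_char in hV. destruct hV as [T [tT [le TV]]].
      apply tau_max with (T := quot_top T f).
      * apply (quot_tg (gX := ggrp G)); auto.
      * intros V' hV'. apply qf. apply le. exact hV'.
      * exact TV.
  - intros G. split.
    + intros h U. split.
      * intros hU. apply tau_max with (T := gtop G); auto.
      * apply tau_le.
    + intros h. change (tg (ggrp G) (gtop G)). apply tg_ext with (O1 := tau_open G).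
      * apply tau_tg.
      * intros U; split; apply h.
  - intros G. split.
    + intros d U. apply tau_max with (T := gtop G); auto. apply disc_tg; auto.
    + intros d U. apply tau_le. apply d.
Qed.
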